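(* Let $k\ge1$ be the cache size, let $\mathcal{A}$ be a conservative or marking paging algorithm and $\mathcal{B}$ any paging algorithm. Then for any access graph $G$, \[\mathrm{Min}^G(\mathcal{B},\mathcal{A})\ge-1+\frac1k\quad\text{and}\quad \mathrm{Max}^G(\mathcal{A},\mathcal{B})\le1-\frac1k.\]
   Context: Paging: a cache holds at most $k$ pages and is initially empty. A request to a page in the cache is a hit; otherwise it is a fault, the page is brought into the cache, evicting a page first if the cache is full. $\mathcal{A}(I)$ is the number of faults of $\mathcal{A}$ on request sequence $I$. $k$-phases: a request sequence is divided recursively: phase 0 is empty, and for $i\ge1$ phase $i$ is a maximal sequence following phase $i-1$ containing at most $k$ distinct pages. An algorithm is conservative if it incurs at most $k$ faults on any consecutive subsequence containing at most $k$ distinct pages. An algorithm is marking if, within any $k$-phase, once a page has been requested in that phase it is not evicted for the rest of that phase. Access graph: a graph $G$ whose vertices are the pages; a request sequence respects $G$ if any two consecutive requests are identical or adjacent in $G$; $L(G)$ is the set of such sequences. Relative interval: $\mathrm{Min}_{\mathcal{A},\mathcal{B}}(n,G)=\min\{\mathcal{A}(I)-\mathcal{B}(I): I\in L(G),|I|=n\}$, $\mathrm{Max}_{\mathcal{A},\mathcal{B}}(n,G)$ analogously with max; $\mathrm{Min}^G(\mathcal{A},\mathcal{B})=\liminf_{n\to\infty}\mathrm{Min}_{\mathcal{A},\mathcal{B}}(n,G)/n$ and $\mathrm{Max}^G(\mathcal{A},\mathcal{B})=\limsup_{n\to\infty}\mathrm{Max}_{\mathcal{A},\mathcal{B}}(n,G)/n$.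 *)

(* Defs.v *)
From HB Require Import structures.
From mathcomp Require Import all_boot all_order all_algebra.
Set Implicit Arguments. Unset Strict Implicit. Unset Printing Implicit Defensive.
Import Order.TTheory GRing.Theory Num.Theory.

Section Paging.
Variable T : finType.   (* the pages = vertices of the access graph *)
Variable k : nat.

(* A deterministic online paging algorithm: when a fault occurs on a full
   cache, it chooses the page to evict as a function of the request history
   (including the current request) and the current cache contents.  If the
   returned page is not in the cache, some page of the cache is evicted
   instead (so every function yields a legitimate demand-paging algorithm). *)
Record paging_alg := PagingAlg { evict : seq T -> {set T} -> T }.

Definition step (A : paging_alg) (h : seq T) (C : {set T}) (x : T) : {set T} :=
  if x \in C then C
  else if #|C| < k then x |: C
  else let y := evict A h C in
       let v := if y \in C then y else odflt x [pick z in C] in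
       x |: (C :\ v).

(* caches_from A h C s : the cache contents before each request of s, and
   after the last one (size s + 1 entries); h = history so far. *)
Fixpoint caches_from (A : paging_alg) (h : seq T) (C : {set T}) (s : seq T)
  : seq {set T} :=
  match s with
  | [::] => [:: C]
  | x :: s' => C :: caches_from A (rcons h x) (step A (rcons h x) C x) s'
  end.

(* cache contents after the first i requests of I (initially empty) *)
Definition cache_at (A : paging_alg) (I : seq T) (i : nat) : {set T} :=
  nth set0 (caches_from A [::] set0 I) i.

Fixpoint faults_from (A : paging_alg) (h : seq T) (C : {set T}) (s : seq T)
  : seq bool :=
  match s with
  | [::] => [::]
  | x :: s' => (x \notin C) :: faults_from A (rcons h x) (step A (rcons h x) C x) s'
  end.

Definition fault_at (A : paging_alg) (I : seq T) (i : nat) : bool :=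
  nth false (faults_from A [::] set0 I) i.

Definition cost (A : paging_alg) (I : seq T) : nat :=
  count id (faults_from A [::] set0 I).

(* k-phases: greedy maximal decomposition; phase_ids I lists, for each
   request, the (1-based) index of its k-phase. *)
Fixpoint phase_ids_from (D : {set T}) (p : nat) (s : seq T) : seq nat :=
  match s with
  | [::] => [::]
  | x :: s' =>
      if (x \in D) || (#|D| < k) then p :: phase_ids_from (x |: D) p s'
      else p.+1 :: phase_ids_from [set x] p.+1 s'
  end.

Definition phase_ids (I : seq T) : seq nat := phase_ids_from set0 1 I.

(* conservative: at most k faults on any consecutive subsequence (positions
   a..b-1 of I) containing at most k distinct pages *)
Definition conservative (A : paging_alg) : Prop :=
  forall (I : seq T) (a b : nat), a <= b <= size I ->
    #|[set x in take (b - a) (drop a I)]| <= k ->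
    \sum_(a <= i < b) fault_at A I i <= k.

(* marking: a page requested at position i is not evicted at any later
   position j of the same k-phase, i.e. it is in the cache after request j *)
Definition marking (A : paging_alg) : Prop :=
  forall (I : seq T) (x0 : T) (i j : nat), i <= j < size I ->
    nth 0 (phase_ids I) i = nth 0 (phase_ids I) j ->
    nth x0 I i \in cache_at A I j.+1.

Definition respects (G : rel T) (I : seq T) : bool :=
  sorted (fun x y => (x == y) || G x y) I.

End Paging.

From mathcomp Require Import all_classical all_reals all_analysis.

Section Relative.
Variable R : realType.
Variable T : finType.
Variable k : nat.
Local Open Scope ring_scope.
Local Open Scope classical_set_scope.
Local Open Scope ereal_scope.

Definition diffs (A B : paging_alg T) (n : nat) (G : rel T) : set (\bar R) :=
  [set ((cost k A I)%:R - (cost k B I)%:R)%R%:E | I in [set I : seq T | respects G I /\ size I = n]].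

Definition MinAB (A B : paging_alg T) (n : nat) (G : rel T) : \bar R :=
  ereal_inf (diffs A B n G).
Definition MaxAB (A B : paging_alg T) (n : nat) (G : rel T) : \bar R :=
  ereal_sup (diffs A B n G).

Definition MinG (G : rel T) (A B : paging_alg T) : \bar R :=
  limn_einf (fun n => MinAB A B n G * (n%:R^-1)%R%:E).
Definition MaxG (G : rel T) (A B : paging_alg T) : \bar R :=
  limn_esup (fun n => MaxAB A B n G * (n%:R^-1)%R%:E).

End Relative.

(* Main.v *)
Require Import Defs.
From HB Require Import structures.
From mathcomp Require Import all_boot all_order all_algebra.
From mathcomp Require Import zify.

Section Comb.
Variables (T : finType) (k : nat).
Hypothesis k1 : (0 < k)%N.
Implicit Types (A B : paging_alg T) (h s : seq T) (C D : {set T}) (x : T).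

Lemma size_faults A h C s : size (faults_from k A h C s) = size s.
Proof. by elim: s h C => //= x s IH h C; rewrite IH. Qed.

Lemma size_phase D p s : size (phase_ids_from k D p s) = size s.
Proof. by elim: s D p => //= x s IH D p; case: ifP => _ /=; rewrite IH. Qed.

Lemma fault_nth A h C s x0 i : i < size s ->
  nth false (faults_from k A h C s) i =
  (nth x0 s i \notin nth set0 (caches_from k A h C s) i).
Proof. by elim: s h C i => //= x s IH h C [|i] //= /IH. Qed.

Lemma step_in A h C x : x \in step k A h C x.
Proof. by rewrite /step; case: ifP => // _; case: ifP => _; rewrite setU11. Qed.

Lemma step_card A h C x : #|C| <= k -> #|step k A h C x| <= k.
Proof.
move=> hC; rewrite /step; case: ifP => // xC; case: ifP => [lt|/negbT].
  by rewrite cardsU1 xC.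
rewrite -leqNgt => kC.
set v := (if _ \in C then _ else _).
have vC : v \in C.
  rewrite /v; case: ifP => // _; case: pickP => [z //|none].
  have C0 : C = set0 by apply/setP => z; rewrite inE none.
  by move: kC; rewrite C0 cards0; lia.
have := cardsD1 v C; rewrite vC cardsU1.
by case: (x \notin _) => /=; lia.
Qed.

Lemma phase_path D p s : path leq p (phase_ids_from k D p s).
Proof. by elim: s D p => //= x s IH D p; case: ifP => _ /=; rewrite ?leqnn ?leqnSn IH. Qed.

Lemma B_bound B s h C D p (e : bool) : (e || (D \subset C)) -> #|C| <= k ->
  last p (phase_ids_from k D p s) <= p + e + count id (faults_from k B h C s).
Proof.
elim: s h C D p e => [|x s IH] h C D p e /= hinv hC; first by lia.
case: ifP => hx /=.
- have inv : (e || (x \notin C)) || (x |: D \subset step k B (rcons h x) C x).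
    case xC: (x \in C) => /=; last by rewrite orbT.
    rewrite orbF; move: hinv; rewrite /step xC; case: (e) => //= DC.
    by rewrite subUset sub1set xC DC.
  have H := IH (rcons h x) (step k B (rcons h x) C x) (x |: D) p _ inv
    (step_card _ _ _ _ hC).
  by apply: leq_trans H _; case: (e); case: (x \notin C); lia.
- have := IH (rcons h x) (step k B (rcons h x) C x) [set x] p.+1 false _
    (step_card _ _ _ _ hC).
  rewrite sub1set step_in => /(_ isT) H; apply: leq_trans H _.
  suff: 0 < e + (x \notin C) by case: (x \notin C); lia.
  case: e hinv => //= DC.
  move/negbT: hx; rewrite negb_or -leqNgt => /andP[xD kD].
  have /eqP DeC : D == C by rewrite eqEcard DC (leq_trans hC kD).
  by rewrite -DeC xD.
Qed.

Definition pages (j : nat) (s : seq T) (l : seq nat) : seq T :=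
  [seq y.1 | y <- zip s l & y.2 == j].

Arguments pages : simpl never.

Lemma pages_nil j s l : all (fun q => j < q) l -> pages j s l = [::].
Proof.
elim: s l => [|x s IH] [|q l] //= /andP[jq hl]; rewrite /pages /=.
have -> : (q == j) = false by apply/eqP; lia.
exact: IH.
Qed.

Lemma pages_cons j x s q l :
  pages j (x :: s) (q :: l) = if q == j then x :: pages j s l else pages j s l.
Proof. by rewrite /pages /=; case: (q == j). Qed.

Lemma pages_card D p s j : #|D| <= k ->
  #|(if j == p then D else set0) :|: [set y | y \in pages j s (phase_ids_from k D p s)]| <= k.
Proof.
elim: s D p => [|x s IH] D p hD /=.
  have -> : [set y | y \in pages j [::] [::]] = set0 by apply/setP => y; rewrite !inE.
  by rewrite setU0; case: ifP; rewrite ?cards0.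
case hx: ((x \in D) || (#|D| < k)); rewrite pages_cons.
- have hD' : #|x |: D| <= k.
    by rewrite cardsU1; case/orP: hx => [->//|]; case: (x \notin D) => /=; lia.
  have := IH (x |: D) p hD'.
  case: (eqVneq j p) => [->|ne]; last first.
    by [].
  rewrite ?eqxx => H; apply: leq_trans H; apply: subset_leq_card.
  apply/subsetP => y; rewrite !inE.
  by case: (y == x); case: (y \in D); case: (y \in pages _ _ _).
- have hD1 : #|[set x]| <= k by rewrite cards1.
  have := IH [set x] p.+1 hD1.
  case: (eqVneq j p) => [->|ne].
    rewrite pages_nil; last exact: (order_path_min leq_trans (phase_path _ _ _)).
    move=> _; have -> : (p.+1 == p) = false by apply/eqP; lia.
    by rewrite ?eqxx; apply: leq_trans hD; apply: subset_leq_card; apply/subsetP => y;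
       rewrite !inE ?orbF.
  case: (eqVneq j p.+1) => [->|ne2]; last first.
    by rewrite ?eqxx ?(negbTE ne2) // eq_sym (negbTE ne2).
  rewrite ?eqxx => H; apply: leq_trans H; apply: subset_leq_card.
  apply/subsetP => y; rewrite !inE.
  by case: (y == x); case: (y \in pages _ _ _).
Qed.


Lemma sorted_count_lt (L : seq nat) j i : sorted leq L -> i < size L ->
  (i < count (fun q => q < j) L) = (nth 0 L i < j).
Proof.
elim: L i => [|q L IH] i //= hs.
have hL := path_sorted hs.
have allq := order_path_min leq_trans hs.
case qj: (q < j) => /=.
  by case: i => [|i] //= hi; rewrite add1n ltnS IH.
have c0 : count (fun q => q < j) L = 0.
  apply/eqP; rewrite -leqn0 leqNgt -has_count; apply/hasPn => r /(allP allq) qr.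
  by rewrite -leqNgt (leq_trans _ qr) // leqNgt qj.
rewrite c0; case: i => [|i] //= hi.
have := (all_nthP 0 allq) i hi.
by move=> qr; apply/esym/negbTE; rewrite -leqNgt (leq_trans _ qr) // leqNgt qj.
Qed.

Lemma cost_sum A I : cost k A I = \sum_(0 <= i < size I) fault_at k A I i.
Proof.
rewrite /cost /fault_at -sum1_count (big_nth false) size_faults big_mkcond /=.
by apply: eq_bigr => i _; case: (nth _ _ _).
Qed.

Lemma pages_mem I x0 i : i < size I ->
  nth x0 I i \in pages (nth 0 (phase_ids k I) i) I (phase_ids k I).
Proof.
move=> hi; rewrite /pages; apply/mapP; exists (nth x0 I i, nth 0 (phase_ids k I) i) => //.
rewrite mem_filter /= eqxx /= -nth_zip; last by rewrite /phase_ids size_phase.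
by apply: mem_nth; rewrite size_zip /phase_ids size_phase minnn.
Qed.

Lemma pages_card0 j I : #|[set y | y \in pages j I (phase_ids k I)]| <= k.
Proof. by have := pages_card set0 1 I j (leq_trans (eq_leq (cards0 T)) (leq0n k)); rewrite if_same set0U. Qed.

Lemma W_cons A I j : conservative k A ->
  \sum_(0 <= i < size I | nth 0 (phase_ids k I) i == j) fault_at k A I i <= k.
Proof.
move=> hc; set L := phase_ids k I; set n := size I.
have sL : sorted leq L := path_sorted (phase_path set0 1 I).
have sz : size L = n by rewrite /L /phase_ids size_phase.
set a := count (fun q => q < j) L; set b := count (fun q => q < j.+1) L.
have ab : a <= b by apply: sub_count => q /=; lia.
have bn : b <= n by rewrite -sz count_size.
have hin i : i < n -> (nth 0 L i == j) = (a <= i < b).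
  move=> hi; rewrite -sz in hi.
  have h1 := sorted_count_lt L j i sL hi; have h2 := sorted_count_lt L j.+1 i sL hi.
  by rewrite leqNgt h1 h2 -leqNgt ltnS andbC -eqn_leq.
rewrite (@big_cat_nat _ _ _ a 0 n) //=; last exact: leq_trans ab bn.
rewrite (@big_cat_nat _ _ _ b a n) //=.
have S1 : \sum_(0 <= i < a | nth 0 L i == j) (fault_at k A I i : nat) = 0.
  rewrite big_nat_cond big1 // => i /andP[/andP[_ ia]].
  have ilt : i < n by lia.
  by rewrite hin // leqNgt ia.
have S3 : \sum_(b <= i < n | nth 0 L i == j) (fault_at k A I i : nat) = 0.
  rewrite big_nat_cond big1 // => i /andP[/andP[bi ilt]].
  by rewrite hin // [i < b]ltnNge bi andbF.
have S2 : \sum_(a <= i < b | nth 0 L i == j) (fault_at k A I i : nat) =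
          \sum_(a <= i < b) fault_at k A I i.
  rewrite big_nat_cond [RHS]big_nat_cond; apply: eq_bigl => i.
  case h: (a <= i < b) => //=.
  by rewrite hin ?h //; case/andP: h => _; lia.
rewrite S1 S3 S2 add0n addn0; apply: hc; first by rewrite ab bn.
apply: leq_trans (pages_card0 j I); apply: subset_leq_card; apply/subsetP => y.
rewrite !inE => /(nthP y) [m hm <-].
rewrite size_takel in hm; last by rewrite size_drop -/n; lia.
rewrite nth_take // nth_drop.
have hj : nth 0 L (a + m) == j by rewrite hin; lia.
by rewrite -(eqP hj); apply: pages_mem; lia.
Qed.

Lemma W_mark A I j x0 : marking k A ->
  \sum_(0 <= i < size I | nth 0 (phase_ids k I) i == j) fault_at k A I i <= k.
Proof.
move=> hm; set L := phase_ids k I; set n := size I.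
have sL : sorted leq L := path_sorted (phase_path set0 1 I).
have sz : size L = n by rewrite /L /phase_ids size_phase.
have hle := sorted_leq_nth leq_trans leqnn 0 sL.
have helper (i i' : nat) : i < i' < n -> nth 0 L i == j -> nth 0 L i' == j ->
    fault_at k A I i' -> nth x0 I i != nth x0 I i'.
  move=> /andP[lt lt'] pi pi' fi'.
  have e : nth 0 L i = nth 0 L i'.-1.
    apply/eqP; rewrite eqn_leq hle ?inE ?sz //=; try lia.
    by rewrite (eqP pi) -(eqP pi') hle ?inE ?sz //=; lia.
  have hr : i <= i'.-1 < size I by rewrite -/n; lia.
  have H := hm I x0 i i'.-1 hr e; rewrite (ltn_predK lt) in H.
  move: fi'; rewrite /fault_at (fault_nth _ _ _ _ x0) // => /negP nin.
  by apply/eqP => E; apply: nin; rewrite -E; exact: H.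
rewrite big_mkord.
set S := [set i : 'I_n | (nth 0 L i == j) && fault_at k A I i].
have -> : \sum_(i < n | nth 0 L i == j) (fault_at k A I i : nat) = #|S|.
  rewrite -sum1_card; apply: esym.
  rewrite (eq_bigl (fun i : 'I_n => (nth 0 L i == j) && fault_at k A I i)); last first.
    by move=> i; rewrite inE.
  by rewrite big_mkcondr; apply: eq_bigr => i _; case: fault_at.
have inj : {in S &, injective (fun i : 'I_n => nth x0 I i)}.
  move=> i i'; rewrite !inE => /andP[pi fi] /andP[pi' fi'] e.
  case: (ltngtP i i') => [lt|gt|eq]; last exact: val_inj.
    by move: (helper i i'); rewrite e eqxx ltn_ord lt => /(_ isT pi pi' fi').
  by move: (helper i' i); rewrite e eqxx ltn_ord gt => /(_ isT pi' pi fi).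
rewrite -(card_in_imset inj); apply: leq_trans (pages_card0 j I).
apply: subset_leq_card; apply/subsetP => y /imsetP[i iS ->].
rewrite inE; move: iS; rewrite inE => /andP[/eqP <- _].
exact: pages_mem.
Qed.


Lemma sum_ind (a b q c : nat) : a <= q < b ->
  \sum_(a <= j < b) (if q == j then c else 0) = c.
Proof.
move=> /andP[aq qb].
rewrite (@big_cat_nat _ _ _ q a b) //; last exact: ltnW.
rewrite (@big_ltn _ _ _ q b) // eqxx.
rewrite big_nat_cond big1 => [|j /andP[/andP[_ jq] _]]; last by rewrite gtn_eqF.
rewrite big_nat_cond big1 => [|j /andP[/andP[qj _] _]]; last by rewrite ltn_eqF.
by rewrite /= add0n addn0.
Qed.

Lemma counting (n M : nat) (ph : nat -> nat) (f : nat -> bool) :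
  (forall i, i < n -> 1 <= ph i <= M) ->
  (forall j, \sum_(0 <= i < n | ph i == j) f i <= k) ->
  k * (\sum_(0 <= i < n) f i) <= k.-1 * n + k * M.
Proof.
move=> hph hW.
have part (F : nat -> nat) : \sum_(0 <= i < n) F i =
    \sum_(1 <= j < M.+1) \sum_(0 <= i < n | ph i == j) F i.
  under [RHS]eq_bigr do rewrite big_mkcond.
  rewrite exchange_big_nat /=; apply: eq_big_nat => i hi.
  by rewrite sum_ind //; have := hph i; lia.
have eA := part (fun i => nat_of_bool (f i)).
have eL : \sum_(1 <= j < M.+1) \sum_(0 <= i < n | ph i == j) 1 = n.
  by rewrite -part sum_nat_const_nat muln1 subn0.
have eM : \sum_(1 <= j < M.+1) 1 = M by rewrite sum_nat_const_nat muln1 subSS subn0.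
suff H : k * (\sum_(1 <= j < M.+1) \sum_(0 <= i < n | ph i == j) (f i : nat)) <=
   k.-1 * (\sum_(1 <= j < M.+1) \sum_(0 <= i < n | ph i == j) 1) + k * \sum_(1 <= j < M.+1) 1.
  by move: H; rewrite eL eM -eA.
rewrite !big_distrr -big_split /=; apply: leq_sum => j _.
set c := \sum_(0 <= i < n | ph i == j) (f i : nat).
set l := \sum_(0 <= i < n | ph i == j) 1.
have cl : c <= l by apply: leq_sum => i _; exact: leq_b1.
have ck : c <= k := hW j.
rewrite -{1}(prednK k1) mulSn addnC muln1 leq_add //.
by rewrite leq_mul2l cl orbT.
Qed.

Lemma key A B I :
  conservative k A \/ marking k A ->
  k * cost k A I <= k.-1 * size I + k * cost k B I.
Proof.
move=> hA.
case: I => [|x0 s]; first by rewrite /cost /= muln0.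
set I := x0 :: s; set L := phase_ids k I; set n := size I.
have sL : sorted leq L := path_sorted (phase_path set0 1 I).
have sz : size L = n by rewrite /L /phase_ids size_phase.
have hle := sorted_leq_nth leq_trans leqnn 0 sL.
set M := nth 0 L n.-1.
have hph i : i < n -> 1 <= nth 0 L i <= M.
  move=> hi; apply/andP; split.
    have hall : all (leq 1) L := order_path_min leq_trans (phase_path set0 1 I).
    by apply: (all_nthP 0 hall); rewrite sz.
  by apply: hle; rewrite ?inE ?sz //= /n /=; lia.
have hB : M <= cost k B I.
  rewrite /M -sz nth_last /L /phase_ids /= in_set0 cards0 k1 /=.
  rewrite /cost /= in_set0 /=.
  have hs : step k B [:: x0] set0 x0 = x0 |: set0 by rewrite /step in_set0 cards0 k1.
  have := B_bound B s [:: x0] (step k B [:: x0] set0 x0) (x0 |: set0) 1 false.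
  rewrite hs subxx => /(_ isT); rewrite -hs step_card ?cards0 // => /(_ isT).
  exact: id.
have hW j : \sum_(0 <= i < n | nth 0 L i == j) fault_at k A I i <= k.
  by case: hA => [hc|hm]; [exact: W_cons | exact: (W_mark _ _ _ x0)].
rewrite (cost_sum A I).
have H := @counting n M (fun i => nth 0 L i) (fault_at k A I) hph hW.
apply: leq_trans H _.
by rewrite leq_add2l leq_mul2l hB orbT.
Qed.

End Comb.

From mathcomp Require Import all_classical all_reals all_analysis.
From mathcomp Require Import lra.
Import Order.TTheory GRing.Theory Num.Theory.
Local Open Scope ring_scope.

Lemma diff_bound (R : realType) (T : finType) (k : nat) (A B : paging_alg T) (I : seq T) :
  (1 <= k)%N -> conservative k A \/ marking k A ->
  ((cost k A I)%:R - (cost k B I)%:R <= (1 - (k%:R)^-1) * (size I)%:R :> R).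
Proof.
move=> k1 hA; have := @key T k k1 A B I hA.
set a := cost k A I; set b := cost k B I; set n := size I => h.
have kp : (0 < k%:R :> R) by rewrite ltr0n.
have : ((k * a)%:R <= (k.-1 * n + k * b)%:R :> R) by rewrite ler_nat.
rewrite !natrD !natrM -subn1 natrB // => h2.
have e : (k%:R^-1 * k%:R = 1 :> R) by rewrite mulVf ?gt_eqF.
have : (a%:R - b%:R = k%:R^-1 * (k%:R * a%:R - k%:R * b%:R) :> R).
  by rewrite mulrBr !mulrA e !mul1r.
move=> ->.
have ki : (0 <= k%:R^-1 :> R) by rewrite invr_ge0 ltW.
have : (k%:R * a%:R - k%:R * b%:R <= (k%:R - 1) * n%:R :> R) by lra.
move=> /(ler_wpM2l ki) H; apply: (le_trans H).
by rewrite mulrA mulrBr e mulr1 mulrBl mul1r.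
Qed.

Theorem proposition1 (R : realType) (T : finType) (k : nat) (A B : paging_alg T)
  (G : rel T) :
  (1 <= k)%N ->
  symmetric G -> irreflexive G ->
  conservative k A \/ marking k A ->
  ((- 1 + (k%:R)^-1)%:E <= MinG R k G B A)%E /\
  (MaxG R k G A B <= (1 - (k%:R)^-1)%:E)%E.
Proof.
move=> k1 _ _ hA.
have bnd n : (0 < n)%N ->
  (MaxAB R k A B n G * (n%:R^-1)%:E <= (1 - (k%:R)^-1)%:E)%E /\
  ((- 1 + (k%:R)^-1)%:E <= MinAB R k B A n G * (n%:R^-1)%:E)%E.
  move=> n0.
  have np : (0 < n%:R :> R) by rewrite ltr0n.
  have hc : (1 - (k%:R)^-1 = (1 - (k%:R)^-1) * n%:R * n%:R^-1 :> R).
    by rewrite -mulrA mulfV ?gt_eqF // mulr1.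
  split.
    rewrite hc EFinM; apply: lee_wpmul2r; first by rewrite lee_fin invr_ge0 ltW.
    apply: ge_ereal_sup => _ [I [_ sI] <-]; rewrite lee_fin -sI.
    exact: diff_bound.
  have hc' : (- 1 + (k%:R)^-1 = - ((1 - (k%:R)^-1) * n%:R) * n%:R^-1 :> R).
    by rewrite mulNr -hc opprB addrC.
  rewrite hc' EFinM; apply: lee_wpmul2r; first by rewrite lee_fin invr_ge0 ltW.
  apply: le_ereal_inf_tmp => _ [I [_ sI] <-]; rewrite lee_fin -sI.
  have := @diff_bound R T k A B I k1 hA; lra.
split.
  rewrite /MinG limn_einf_lim; apply: lime_ge; first exact: is_cvg_einfs.
  near=> m; apply: le_ereal_inf_tmp => _ [n /= mn <-].
  apply: (bnd n _).2; apply: leq_trans mn; near: m; exists 1%N => //.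
rewrite /MaxG limn_esup_lim; apply: lime_le; first exact: is_cvg_esups.
near=> m; apply: ge_ereal_sup => _ [n /= mn <-].
apply: (bnd n _).1; apply: leq_trans mn; near: m; exists 1%N => //.
Unshelve. all: by end_near.
Qed.
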